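(* Let $f^0$ be $f$ with $\gamma_{\rm P}$ replaced by $0$. Then $f^0$ has a unique maximiser $(z^{Q,\star}(0),z^{S,\star}(0))$, which is the limit as $\gamma_{\rm P}\downarrow0$ of the maximiser of $f$. Setting $s^0_{i,n}=z^{S,i,\star}(0)$ and $q^0_{i,j,n}=\nu_jz^{Q,i,j,\star}(0)$, for all $i,j$: $$q^0_{i,j,n}=-\frac{\sigma}{\sqrt n}s^0_{i,n}\rho_j\ (j\ne i),\qquad q^0_{i,i,n}=\frac1{A_i}\Big(\frac1{c_i\nu_i}-\frac{\gamma_i\sigma}{\sqrt n}\rho_is^0_{i,n}\Big),\qquad s^0_{i,n}=-\frac{\sqrt n}{\sigma}\frac{\rho_i}{A_ic_i\nu_i(n-\pi_{i,n})},$$ where $A_i=\gamma_i+\frac{1}{c_i\nu_i^2}$ and $\pi_{i,n}=\|\rho\|^2-\rho_i^2+\frac{\gamma_i}{A_i}\rho_i^2\in[0,n)$. In particular $\mathrm{sgn}(s^0_{i,n})=-\mathrm{sgn}(\rho_i)$, $z^{Q,i,i,\star}(0)>0$ for all $i$, and $\mathrm{sgn}(z^{Q,i,j,\star}(0))=\mathrm{sgn}(\rho_i\rho_j)$ for $j\ne i$.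
   Context: Fix an integer $n\ge1$ and parameters $\sigma>0$, $\gamma_{\rm P}>0$, and for each $i\in\{1,\dots,n\}$: $c_i>0$, $\gamma_i>0$, $\nu_i>0$, $\rho_i\in(-1,1)$. Write $\nu=(\nu_1,\dots,\nu_n)^\top$, $\rho=(\rho_1,\dots,\rho_n)^\top$, $\|\rho\|$ its Euclidean norm. The variables are a matrix $z^Q=(z^{Q,i,j})_{i,j}\in\mathbb{R}^{n\times n}$ ($i$ row, $j$ column) and a vector $z^S=(z^{S,1},\dots,z^{S,n})^\top\in\mathbb{R}^n$. Define $f:\mathbb{R}^{n\times n}\times\mathbb{R}^n\to\mathbb{R}$ by $$f(z^Q,z^S)=-\frac1n\sum_{i=1}^n\Big(\frac{(z^{Q,i,i})^2}{2c_i}+\frac{\gamma_i}{2}\sum_{j=1}^n\nu_j^2(z^{Q,i,j})^2+\frac{\gamma_i\sigma^2}{2}(z^{S,i})^2+\frac{\gamma_i\sigma}{\sqrt n}z^{S,i}\sum_{j=1}^n\rho_j\nu_jz^{Q,i,j}-\frac{z^{Q,i,i}}{c_i}\Big)-\frac{\gamma_{\rm P}}{2n^2}\sum_{i=1}^n\Big(\Big(\nu_i-\nu_i\sum_{j=1}^nz^{Q,j,i}-\frac{\rho_i\sigma}{\sqrt n}\sum_{j=1}^nz^{S,j}\Big)^2+\frac{(1-\rho_i^2)\sigma^2}{n}\Big(\sum_{j=1}^nz^{S,j}\Big)^2\Big).$$ For $\gamma_{\rm P}>0$, $f$ has a unique global maximiser. *)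

(* Defs.v *)
From HB Require Import structures.
From mathcomp Require Import all_boot all_order all_algebra.
From mathcomp Require Import all_classical all_reals all_analysis.
Set Implicit Arguments. Unset Strict Implicit. Unset Printing Implicit Defensive.
Import Order.TTheory GRing.Theory Num.Theory.
Local Open Scope ring_scope.

(* The objective f.  Variables: zQ : 'M_n (zQ i j = z^{Q,i,j}, i row, j column),
   zS : 'cV_n (zS i 0 = z^{S,i}).  gP is gamma_P. *)
Definition fobj (R : realType) (n : nat) (sigma gP : R)
  (c gam nu rho : 'I_n -> R) (zQ : 'M[R]_n) (zS : 'cV[R]_n) : R :=
  let sn := Num.sqrt (n%:R : R) in
  let sumS := \sum_(j < n) zS j 0 in
  - (n%:R)^-1 * \sum_(i < n)
      ( (zQ i i) ^+ 2 / (2 * c i)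
      + gam i / 2 * \sum_(j < n) (nu j) ^+ 2 * (zQ i j) ^+ 2
      + gam i * sigma ^+ 2 / 2 * (zS i 0) ^+ 2
      + gam i * sigma / sn * zS i 0 * \sum_(j < n) rho j * nu j * zQ i j
      - zQ i i / c i )
  - gP / (2 * (n%:R) ^+ 2) * \sum_(i < n)
      ( (nu i - nu i * \sum_(j < n) zQ j i - rho i * sigma / sn * sumS) ^+ 2
      + (1 - (rho i) ^+ 2) * sigma ^+ 2 / n%:R * sumS ^+ 2 ).

Definition is_maximiser (R : realType) (n : nat)
  (F : 'M[R]_n -> 'cV[R]_n -> R) (zQ : 'M[R]_n) (zS : 'cV[R]_n) : Prop :=
  forall (yQ : 'M[R]_n) (yS : 'cV[R]_n), F yQ yS <= F zQ zS.

(* Main.v *)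
Require Import Defs.
From HB Require Import structures.
From mathcomp Require Import all_boot all_order all_algebra.
From mathcomp Require Import all_classical all_reals all_analysis.
From mathcomp Require Import ring lra.
Import Order.TTheory GRing.Theory Num.Theory.
Import numFieldNormedType.Exports.
Local Open Scope ring_scope.
Local Open Scope classical_set_scope.
Set Implicit Arguments. Unset Strict Implicit. Unset Printing Implicit Defensive.

Definition rowg (R : realType) (n : nat) (sigma : R) (c gam nu rho : 'I_n -> R)
  (i : 'I_n) (q : 'I_n -> R) (s : R) : R :=
  q i ^+ 2 / (2 * c i) + gam i / 2 * \sum_(j < n) nu j ^+ 2 * q j ^+ 2
  + gam i * sigma ^+ 2 / 2 * s ^+ 2
  + gam i * sigma / Num.sqrt (n%:R : R) * s * \sum_(j < n) rho j * nu j * q j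
  - q i / c i.

Definition Qrow (R : realType) (n : nat) (sigma : R) (c gam nu rho : 'I_n -> R)
  (i : 'I_n) (d : 'I_n -> R) (e : R) : R :=
  d i ^+ 2 / (2 * c i) + gam i / 2 * \sum_(j < n) nu j ^+ 2 * d j ^+ 2
  + gam i * sigma ^+ 2 / 2 * e ^+ 2
  + gam i * sigma / Num.sqrt (n%:R : R) * e * \sum_(j < n) rho j * nu j * d j.

Definition Hf (R : realType) (n : nat) (sigma : R) (nu rho : 'I_n -> R)
  (zQ : 'M[R]_n) (zS : 'cV[R]_n) : R :=
  let sn := Num.sqrt (n%:R : R) in
  let sumS := \sum_(j < n) zS j 0 in
  (2 * (n%:R) ^+ 2)^-1 * \sum_(i < n)
      ( (nu i - nu i * \sum_(j < n) zQ j i - rho i * sigma / sn * sumS) ^+ 2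
      + (1 - (rho i) ^+ 2) * sigma ^+ 2 / n%:R * sumS ^+ 2 ).

Lemma fobj0E (R : realType) (n : nat) (sigma : R) (c gam nu rho : 'I_n -> R) zQ zS :
  fobj sigma 0 c gam nu rho zQ zS =
  - (n%:R)^-1 * \sum_(i < n) rowg sigma c gam nu rho i (fun j => zQ i j) (zS i 0).
Proof. by rewrite /fobj mul0r mul0r subr0. Qed.

Lemma fobjE (R : realType) (n : nat) (sigma gP : R) (c gam nu rho : 'I_n -> R) zQ zS :
  fobj sigma gP c gam nu rho zQ zS =
  fobj sigma 0 c gam nu rho zQ zS - gP * Hf sigma nu rho zQ zS.
Proof. rewrite /fobj /Hf /=. ring. Qed.

Lemma Hf_ge0 (R : realType) (n : nat) (sigma : R) (nu rho : 'I_n -> R) zQ zS :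
  (forall i, -1 < rho i < 1) -> 0 <= Hf sigma nu rho zQ zS.
Proof.
move=> hr; rewrite /Hf /=; apply: mulr_ge0; first by rewrite invr_ge0 mulr_ge0 // exprn_ge0.
apply: sumr_ge0 => i _; apply: addr_ge0; first exact: sqr_ge0.
have /andP[h1 h2] := hr i.
apply: mulr_ge0; last exact: sqr_ge0.
apply: mulr_ge0; last by rewrite invr_ge0.
apply: mulr_ge0; last exact: sqr_ge0.
rewrite subr_ge0; nra.
Qed.

Lemma row_diff (R : realType) (n : nat) (sigma : R) (c gam nu rho : 'I_n -> R)
  (i : 'I_n) (y z : 'I_n -> R) (t s : R) :
  c i != 0 -> Num.sqrt (n%:R : R) != 0 ->
  (forall j, j != i -> gam i * nu j ^+ 2 * z j + gam i * sigma / Num.sqrt (n%:R : R) * s * (rho j * nu j) = 0) ->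
  gam i * nu i ^+ 2 * z i + gam i * sigma / Num.sqrt (n%:R : R) * s * (rho i * nu i) = (1 - z i) / c i ->
  gam i * sigma / Num.sqrt (n%:R : R) * (\sum_(j < n) rho j * nu j * z j) + gam i * sigma ^+ 2 * s = 0 ->
  rowg sigma c gam nu rho i y t - rowg sigma c gam nu rho i z s =
  Qrow sigma c gam nu rho i (fun j => y j - z j) (t - s).
Proof.
move=> hc hsn Fj Fi Fs.
set sn := Num.sqrt _ in hsn Fj Fi Fs *.
have E1 : \sum_(j < n) nu j ^+ 2 * y j ^+ 2 = \sum_(j < n) nu j ^+ 2 * z j ^+ 2
   + 2 * \sum_(j < n) nu j ^+ 2 * z j * (y j - z j) + \sum_(j < n) nu j ^+ 2 * (y j - z j) ^+ 2.
  rewrite mulr_sumr -!big_split /=; apply: eq_bigr => j _; ring.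
have E2 : \sum_(j < n) rho j * nu j * y j = \sum_(j < n) rho j * nu j * z j
   + \sum_(j < n) rho j * nu j * (y j - z j).
  rewrite -big_split /=; apply: eq_bigr => j _; ring.
have E3 : gam i * \sum_(j < n) nu j ^+ 2 * z j * (y j - z j) + gam i * sigma / sn * s *
   \sum_(j < n) rho j * nu j * (y j - z j) = (1 - z i) / c i * (y i - z i).
  rewrite !mulr_sumr -big_split /= (bigD1 i) //= big1 ?addr0.
    rewrite -Fi; ring.
  move=> j hj; have := Fj j hj; move=> h.
  transitivity ((gam i * nu j ^+ 2 * z j + gam i * sigma / sn * s * (rho j * nu j)) * (y j - z j)); first ring.
  by rewrite h mul0r.
rewrite /rowg /Qrow -/sn E1 E2.
apply/eqP; rewrite -subr_eq0; apply/eqP.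
transitivity ((gam i * \sum_(j < n) nu j ^+ 2 * z j * (y j - z j) + gam i * sigma / sn * s *
   \sum_(j < n) rho j * nu j * (y j - z j) - (1 - z i) / c i * (y i - z i)) +
   (t - s) * (gam i * sigma / sn * (\sum_(j < n) rho j * nu j * z j) + gam i * sigma ^+ 2 * s)).
  by field; rewrite hsn hc.
by rewrite E3 Fs subrr mulr0 addr0.
Qed.

Lemma Qrow_sq (R : realType) (n : nat) (sigma : R) (c gam nu rho : 'I_n -> R)
  (i : 'I_n) (d : 'I_n -> R) (e : R) :
  (0 < n)%N -> c i != 0 ->
  Qrow sigma c gam nu rho i d e =
  d i ^+ 2 / (2 * c i) + gam i / 2 * \sum_(j < n) (nu j * d j + sigma / Num.sqrt (n%:R : R) * e * rho j) ^+ 2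
  + gam i * sigma ^+ 2 / 2 * e ^+ 2 * (1 - (\sum_(j < n) rho j ^+ 2) / n%:R).
Proof.
move=> hn hc.
have hN : (0 : R) <= n%:R by rewrite ler0n.
have hsn : Num.sqrt (n%:R : R) != 0 by rewrite sqrtr_eq0 -ltNge ltr0n.
set sn := Num.sqrt _ in hsn *.
have hsq : (n%:R : R) = sn ^+ 2 by rewrite sqr_sqrtr.
have E : \sum_(j < n) (nu j * d j + sigma / sn * e * rho j) ^+ 2 =
  \sum_(j < n) nu j ^+ 2 * d j ^+ 2 + 2 * (sigma / sn * e) * \sum_(j < n) rho j * nu j * d j
  + (sigma / sn * e) ^+ 2 * \sum_(j < n) rho j ^+ 2.
  rewrite !mulr_sumr -!big_split /=; apply: eq_bigr => j _; ring.
rewrite E /Qrow -/sn hsq.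
by field; rewrite hsn hc.
Qed.

Lemma Qrow_bounds (R : realType) (n : nat) (sigma : R) (c gam nu rho : 'I_n -> R)
  (i : 'I_n) (d : 'I_n -> R) (e : R) :
  (0 < n)%N -> 0 < c i -> 0 < gam i -> \sum_(j < n) rho j ^+ 2 < n%:R ->
  gam i * sigma ^+ 2 / 2 * (1 - (\sum_(j < n) rho j ^+ 2) / n%:R) * e ^+ 2
     <= Qrow sigma c gam nu rho i d e /\
  forall j, gam i / 2 * (nu j * d j + sigma / Num.sqrt (n%:R : R) * e * rho j) ^+ 2
     <= Qrow sigma c gam nu rho i d e.
Proof.
move=> hn hc hg hP.
rewrite Qrow_sq //; last by rewrite gt_eqF.
have h1 : 0 <= d i ^+ 2 / (2 * c i) by rewrite divr_ge0 ?sqr_ge0 // mulr_ge0 // ltW.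
have hk : 0 <= 1 - (\sum_(j < n) rho j ^+ 2) / n%:R.
  by rewrite subr_ge0 ler_pdivrMr ?ltr0n // mul1r ltW.
have h3 : 0 <= gam i * sigma ^+ 2 / 2 * e ^+ 2 * (1 - (\sum_(j < n) rho j ^+ 2) / n%:R).
  by rewrite mulr_ge0 // mulr_ge0 ?sqr_ge0 // mulr_ge0 // mulr_ge0 ?sqr_ge0 // ltW.
have hs : forall j, (nu j * d j + sigma / Num.sqrt (n%:R : R) * e * rho j) ^+ 2
   <= \sum_(j < n) (nu j * d j + sigma / Num.sqrt (n%:R : R) * e * rho j) ^+ 2.
  move=> j; rewrite (bigD1 j) //= lerDl; apply: sumr_ge0 => k _; exact: sqr_ge0.
have hs0 : 0 <= \sum_(j < n) (nu j * d j + sigma / Num.sqrt (n%:R : R) * e * rho j) ^+ 2.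
  by apply: sumr_ge0 => k _; exact: sqr_ge0.
have hg2 : 0 <= gam i / 2 by rewrite divr_ge0 // ltW.
split.
  have : 0 <= gam i / 2 * \sum_(j < n) (nu j * d j + sigma / Num.sqrt (n%:R : R) * e * rho j) ^+ 2
    by exact: mulr_ge0.
  move: h1 h3; set a := _ * e ^+ 2 * _; set b := _ * (1 - _) * _.
  have -> : b = a by rewrite /a /b; ring.
  lra.
move=> j; have := ler_wpM2l hg2 (hs j); move: h1 h3.
set A := gam i / 2 * _; set B := gam i / 2 * _; lra.
Qed.

Lemma entry_bound (R : realType) (Q u e a nu g k d : R) :
  0 < g -> 0 < k -> 0 < nu -> g / 2 * u ^+ 2 <= Q -> k * e ^+ 2 <= Q ->
  nu * d = u + a * e -> d ^+ 2 <= ((4 / g + 2 * a ^+ 2 / k) / nu ^+ 2) * Q.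
Proof.
move=> hg hk hnu hu he hd.
have h1 : (nu * d) ^+ 2 <= 2 * u ^+ 2 + 2 * a ^+ 2 * e ^+ 2.
  rewrite hd; have := sqr_ge0 (u - a * e); nra.
have h2 : u ^+ 2 <= 2 / g * Q.
  rewrite -(ler_pM2l (_ : 0 < g / 2)); last by rewrite divr_gt0.
  have -> : g / 2 * (2 / g * Q) = Q by field; rewrite gt_eqF.
  exact: hu.
have h3 : e ^+ 2 <= k^-1 * Q.
  rewrite -(ler_pM2l hk).
  have -> : k * (k^-1 * Q) = Q by field; rewrite gt_eqF.
  exact: he.
have h4 : 0 <= a ^+ 2 := sqr_ge0 a.
have h5 : a ^+ 2 * e ^+ 2 <= a ^+ 2 * (k^-1 * Q) := ler_wpM2l h4 h3.
have hnu2 : 0 < nu ^+ 2 by rewrite exprn_gt0.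
rewrite -(ler_pM2l hnu2).
set X := (4 / g + _).
have -> : nu ^+ 2 * (X / nu ^+ 2 * Q) = X * Q by field; rewrite gt_eqF.
rewrite -exprMn /X.
apply: (le_trans h1).
have -> : (4 / g + 2 * a ^+ 2 / k) * Q = 2 * (2 / g * Q) + 2 * (a ^+ 2 * (k^-1 * Q)).
  by field; rewrite !gt_eqF.
lra.
Qed.

Lemma Psum_lt (R : realType) (n : nat) (rho : 'I_n -> R) :
  (0 < n)%N -> (forall i, -1 < rho i < 1) -> \sum_(j < n) rho j ^+ 2 < n%:R.
Proof.
move=> hn hr.
have -> : (n%:R : R) = \sum_(j < n) 1 by rewrite sumr_const card_ord.
apply: ltr_sum.
  by apply/hasP; exists (Ordinal hn); rewrite ?mem_index_enum.
move=> j _; have /andP[h1 h2] := hr j; nra.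
Qed.

Definition Ac (R : realType) (n : nat) (c gam nu : 'I_n -> R) i :=
  gam i + 1 / (c i * nu i ^+ 2).
Definition pic (R : realType) (n : nat) (c gam nu rho : 'I_n -> R) i :=
  \sum_(j < n) rho j ^+ 2 - rho i ^+ 2 + gam i / Ac c gam nu i * rho i ^+ 2.
Definition s0 (R : realType) (n : nat) (sigma : R) (c gam nu rho : 'I_n -> R) i :=
  - (Num.sqrt (n%:R : R) / sigma) *
   (rho i / (Ac c gam nu i * c i * nu i * (n%:R - pic c gam nu rho i))).
Definition q0 (R : realType) (n : nat) (sigma : R) (c gam nu rho : 'I_n -> R) i j :=
  if j == i then (Ac c gam nu i)^-1 * (1 / (c i * nu i) -
     gam i * sigma / Num.sqrt (n%:R : R) * rho i * s0 sigma c gam nu rho i)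
  else - (sigma / Num.sqrt (n%:R : R)) * s0 sigma c gam nu rho i * rho j.

Lemma Ac_gt0 (R : realType) (n : nat) (c gam nu : 'I_n -> R) i :
  0 < c i -> 0 < gam i -> 0 < nu i -> 0 < Ac c gam nu i.
Proof.
move=> hc hg hnu; rewrite /Ac addr_gt0 // divr_gt0 // mulr_gt0 // exprn_gt0 //.
Qed.

Lemma pic_bounds (R : realType) (n : nat) (c gam nu rho : 'I_n -> R) i :
  (0 < n)%N -> (forall i, -1 < rho i < 1) ->
  0 < c i -> 0 < gam i -> 0 < nu i -> 0 <= pic c gam nu rho i < n%:R.
Proof.
move=> hn hr hc hg hnu.
have hA := Ac_gt0 hc hg hnu.
have hP := Psum_lt hn hr.
have hga : gam i / Ac c gam nu i <= 1.
  rewrite ler_pdivrMr // mul1r /Ac lerDl divr_ge0 // ltW // mulr_gt0 // exprn_gt0 //.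
have hga0 : 0 <= gam i / Ac c gam nu i by rewrite divr_ge0 // ltW.
have hrest : rho i ^+ 2 <= \sum_(j < n) rho j ^+ 2.
  rewrite (bigD1 i) //= lerDl; apply: sumr_ge0 => k _; exact: sqr_ge0.
have hr2 := sqr_ge0 (rho i).
rewrite /pic; apply/andP; split; nra.
Qed.

Lemma foc_j (R : realType) (n : nat) (sigma : R) (c gam nu rho : 'I_n -> R) i j :
  (0 < n)%N -> 0 < nu j -> j != i ->
  gam i * nu j ^+ 2 * (q0 sigma c gam nu rho i j / nu j)
  + gam i * sigma / Num.sqrt (n%:R : R) * s0 sigma c gam nu rho i * (rho j * nu j) = 0.
Proof.
move=> hn hnu hji; rewrite /q0 (negPf hji).
set s := s0 _ _ _ _ _ _; set sn := Num.sqrt _.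
have hsn : sn != 0 by rewrite sqrtr_eq0 -ltNge ltr0n.
by field; rewrite hsn gt_eqF.
Qed.

Lemma foc_i (R : realType) (n : nat) (sigma : R) (c gam nu rho : 'I_n -> R) i :
  (0 < n)%N -> 0 < c i -> 0 < gam i -> 0 < nu i ->
  gam i * nu i ^+ 2 * (q0 sigma c gam nu rho i i / nu i)
  + gam i * sigma / Num.sqrt (n%:R : R) * s0 sigma c gam nu rho i * (rho i * nu i)
  = (1 - q0 sigma c gam nu rho i i / nu i) / c i.
Proof.
move=> hn hc hg hnu.
have hA := Ac_gt0 hc hg hnu.
rewrite /q0 eqxx.
set s := s0 _ _ _ _ _ _; set sn := Num.sqrt _.
have hsn : sn != 0 by rewrite sqrtr_eq0 -ltNge ltr0n.
set A := Ac c gam nu i in hA *.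
have hgA : gam i = A - 1 / (c i * nu i ^+ 2) by rewrite /A /Ac; ring.
rewrite hgA.
by field; rewrite hsn !gt_eqF.
Qed.

Lemma foc_s (R : realType) (n : nat) (sigma : R) (c gam nu rho : 'I_n -> R) i :
  (0 < n)%N -> (forall i, -1 < rho i < 1) -> 0 < sigma ->
  0 < c i -> 0 < gam i -> (forall j, 0 < nu j) ->
  gam i * sigma / Num.sqrt (n%:R : R) *
    (\sum_(j < n) rho j * nu j * (q0 sigma c gam nu rho i j / nu j))
  + gam i * sigma ^+ 2 * s0 sigma c gam nu rho i = 0.
Proof.
move=> hn hr hsig hc hg hnu.
have hA := Ac_gt0 hc hg (hnu i).
have /andP[hp0 hpn] := pic_bounds hn hr hc hg (hnu i).
have hsn : Num.sqrt (n%:R : R) != 0 by rewrite sqrtr_eq0 -ltNge ltr0n.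
have hsq : (n%:R : R) = Num.sqrt (n%:R : R) ^+ 2 by rewrite sqr_sqrtr // ler0n.
rewrite (bigD1 i) //=.
have -> : \sum_(j < n | j != i) rho j * nu j * (q0 sigma c gam nu rho i j / nu j) =
  - (sigma / Num.sqrt (n%:R : R)) * s0 sigma c gam nu rho i *
  \sum_(j < n | j != i) rho j ^+ 2.
  rewrite mulr_sumr; apply: eq_bigr => j hj; rewrite /q0 (negPf hj).
  by field; rewrite ?hsn ?gt_eqF ?hnu.
have hD : 0 < n%:R - pic c gam nu rho i by rewrite subr_gt0.
have hP : \sum_(j < n | j != i) rho j ^+ 2 =
   n%:R - (n%:R - pic c gam nu rho i) - gam i / Ac c gam nu i * rho i ^+ 2.
  rewrite /pic [\sum_(j < n) rho j ^+ 2](bigD1 i) //=; ring.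
rewrite hP /q0 eqxx /s0.
set sn := Num.sqrt _ in hsn hsq *.
set A := Ac c gam nu i in hA hP *.
set D := n%:R - pic c gam nu rho i in hD hP *.
clearbody D. rewrite hsq.
by field; rewrite hsn !gt_eqF.
Qed.

Lemma sq_near (R : realType) (g : R -> R) (x0 K : R) :
  0 <= K -> (forall t, 0 < t -> (g t - x0) ^+ 2 <= K * t) ->
  forall e, 0 < e -> \forall t \near 0^'+, `|x0 - g t| < e.
Proof.
move=> hK hg e he.
have hb : 0 < e ^+ 2 / (K + 1) by rewrite divr_gt0 ?exprn_gt0 // ltr_wpDl.
near=> t.
have ht : 0 < t by near: t; exact: nbhs_right_gt.
have htb : t < e ^+ 2 / (K + 1) by near: t; exact: nbhs_right_lt.
have h1 := hg t ht.
have h2 : K * t < e ^+ 2.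
  have hm : (K + 1) * (e ^+ 2 / (K + 1)) = e ^+ 2.
    by field; rewrite gt_eqF // ltr_wpDl.
  nra.
have h3 : (x0 - g t) ^+ 2 < e ^+ 2.
  by rewrite (_ : (x0 - g t) ^+ 2 = (g t - x0) ^+ 2) ?(le_lt_trans h1) //; ring.
rewrite ltr_norml; apply/andP; split; nra.
Unshelve. all: by end_near.
Qed.

Lemma mx_cvg_entries (R : realType) m k (f : R -> 'M[R]_(m, k)) (M : 'M[R]_(m, k)) :
  (forall i j e, 0 < e -> \forall t \near 0^'+, `|M i j - f t i j| < e) ->
  f t @[t --> 0^'+] --> M.
Proof.
move=> h; apply/cvg_ballP => e he.
have : \forall t \near 0^'+, forall i j, `|M i j - f t i j| < e.
  apply: filter_forall => i; apply: filter_forall => j; exact: h.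
apply: filterS => t ht; split => // i j.
Qed.

Lemma signs0 (R : realType) (n : nat) (sigma : R) (c gam nu rho : 'I_n -> R) i :
  (0 < n)%N -> (forall i, -1 < rho i < 1) -> 0 < sigma ->
  0 < c i -> 0 < gam i -> 0 < nu i ->
  [/\ Num.sg (s0 sigma c gam nu rho i) = - Num.sg (rho i),
      0 < q0 sigma c gam nu rho i i / nu i &
      forall j, j != i -> 0 < nu j ->
        Num.sg (q0 sigma c gam nu rho i j / nu j) = Num.sg (rho i * rho j)].
Proof.
move=> hn hr hsig hc hg hnu.
have hA := Ac_gt0 hc hg hnu.
have /andP[hp0 hpn] := pic_bounds hn hr hc hg hnu.
have hD : 0 < n%:R - pic c gam nu rho i by rewrite subr_gt0.
have hsn : 0 < Num.sqrt (n%:R : R) by rewrite sqrtr_gt0 ltr0n.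
set sn := Num.sqrt _ in hsn *.
set A := Ac c gam nu i in hA *.
set D := n%:R - pic c gam nu rho i in hD *.
have hX : 0 < A * c i * nu i * D by rewrite !mulr_gt0.
split.
- rewrite /s0 -/sn -/A -/D sgrM sgrN (gtr0_sg (x := sn / sigma)) ?divr_gt0 //.
  rewrite sgrM (gtr0_sg (x := (A * c i * nu i * D)^-1)) ?invr_gt0 //.
  by rewrite mulr1 mulN1r.
- rewrite /q0 eqxx /s0 -/sn -/A -/D.
  have -> : (A^-1 * (1 / (c i * nu i) - gam i * sigma / sn * rho i *
      (- (sn / sigma) * (rho i / (A * c i * nu i * D))))) / nu i =
      (A^-1 * (1 / (c i * nu i) + gam i * rho i ^+ 2 / (A * c i * nu i * D))) / nu i.
    by field; rewrite !gt_eqF.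
  apply: divr_gt0 => //; apply: mulr_gt0; first by rewrite invr_gt0.
  have h1 : 0 < 1 / (c i * nu i) by rewrite divr_gt0 // mulr_gt0.
  have h2 : 0 <= gam i * rho i ^+ 2 / (A * c i * nu i * D).
    apply: divr_ge0; [apply: mulr_ge0; [exact: ltW| exact: sqr_ge0] | exact: ltW].
  lra.
- move=> j hj hnuj; rewrite /q0 (negPf hj) /s0 -/sn -/A -/D.
  have -> : - (sigma / sn) * (- (sn / sigma) * (rho i / (A * c i * nu i * D))) * rho j / nu j
     = (rho i * rho j) * (A * c i * nu i * D * nu j)^-1.
    by field; rewrite !gt_eqF.
  by rewrite sgrM (gtr0_sg (x := (_)^-1)) ?mulr1 // invr_gt0 mulr_gt0.
Qed.
Unset Implicit Arguments. Set Strict Implicit.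

Lemma sq_le0 (R : realType) (x : R) : x ^+ 2 <= 0 -> x = 0.
Proof. by move=> h; apply/eqP; rewrite -sqrf_eq0 eq_le h sqr_ge0. Qed.

Theorem mainTheorem11 (R : realType) (n : nat) (sigma : R)
  (c gam nu rho : 'I_n -> R) :
  (0 < n)%N -> 0 < sigma ->
  (forall i, 0 < c i) -> (forall i, 0 < gam i) -> (forall i, 0 < nu i) ->
  (forall i, -1 < rho i < 1) ->
  exists (zQ0 : 'M[R]_n) (zS0 : 'cV[R]_n),
    (* unique maximiser of f^0 *)
    [/\ is_maximiser (fobj sigma 0 c gam nu rho) zQ0 zS0,
        (forall yQ yS, is_maximiser (fobj sigma 0 c gam nu rho) yQ yS ->
           yQ = zQ0 /\ yS = zS0),
    (* it is the limit, as gamma_P decreases to 0, of the maximiser of f *)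
        (forall z : R -> 'M[R]_n * 'cV[R]_n,
           (forall gP, 0 < gP -> is_maximiser (fobj sigma gP c gam nu rho) (z gP).1 (z gP).2) ->
           z @ 0^'+ --> (zQ0, zS0)),
    (* explicit formulas *)
        (let sn := Num.sqrt (n%:R : R) in
         let s0 := fun i => zS0 i 0 in
         let q0 := fun i j => nu j * zQ0 i j in
         let A := fun i => gam i + 1 / (c i * (nu i) ^+ 2) in
         let pi_ := fun i => \sum_(j < n) (rho j) ^+ 2 - (rho i) ^+ 2
                             + gam i / A i * (rho i) ^+ 2 in
         forall i : 'I_n,
           [/\ forall j : 'I_n, j != i -> q0 i j = - (sigma / sn) * s0 i * rho j,
               q0 i i = (A i)^-1 * (1 / (c i * nu i) - gam i * sigma / sn * rho i * s0 i),
               s0 i = - (sn / sigma) * (rho i / (A i * c i * nu i * (n%:R - pi_ i))) &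
               0 <= pi_ i < n%:R])
    & (* signs *)
        forall i : 'I_n,
          [/\ Num.sg (zS0 i 0) = - Num.sg (rho i),
              0 < zQ0 i i &
              forall j : 'I_n, j != i -> Num.sg (zQ0 i j) = Num.sg (rho i * rho j)]].
Proof.
move=> hn hsig hc hg hnu hr.
pose zQ0 : 'M[R]_n := \matrix_(i, j) (q0 sigma c gam nu rho i j / nu j).
pose zS0 : 'cV[R]_n := \col_(i < n) s0 sigma c gam nu rho i.
exists zQ0, zS0.
have hsn0 : Num.sqrt (n%:R : R) != 0 by rewrite sqrtr_eq0 -ltNge ltr0n.
have hP := Psum_lt hn hr.
pose Qi (yQ : 'M[R]_n) (yS : 'cV[R]_n) i :=
  Qrow sigma c gam nu rho i (fun j => yQ i j - zQ0 i j) (yS i 0 - zS0 i 0).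
have Fdiff : forall yQ yS, fobj sigma 0 c gam nu rho yQ yS =
   fobj sigma 0 c gam nu rho zQ0 zS0 - (n%:R)^-1 * \sum_(i < n) Qi yQ yS i.
  move=> yQ yS; rewrite !fobj0E.
  have -> : \sum_(i < n) Qi yQ yS i =
     \sum_(i < n) rowg sigma c gam nu rho i (fun j => yQ i j) (yS i 0)
   - \sum_(i < n) rowg sigma c gam nu rho i (fun j => zQ0 i j) (zS0 i 0).
    rewrite -sumrB; apply: eq_bigr => i _.
    have -> : (fun j => zQ0 i j) = (fun j => q0 sigma c gam nu rho i j / nu j).
      by apply/funext => j; rewrite mxE.
    have -> : zS0 i 0 = s0 sigma c gam nu rho i by rewrite mxE.
    rewrite /Qi.
    have -> : (fun j => yQ i j - zQ0 i j) =
              (fun j => yQ i j - q0 sigma c gam nu rho i j / nu j).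
      by apply/funext => j; rewrite mxE.
    have -> : zS0 i 0 = s0 sigma c gam nu rho i by rewrite mxE.
    symmetry; apply: row_diff.
    - by rewrite gt_eqF.
    - exact: hsn0.
    - by move=> j hj; apply: foc_j.
    - exact: foc_i.
    - exact: foc_s.
  ring.
have hkap : forall i, 0 < gam i * sigma ^+ 2 / 2 * (1 - (\sum_(j < n) rho j ^+ 2) / n%:R).
  move=> i; rewrite mulr_gt0 // ?divr_gt0 ?mulr_gt0 ?exprn_gt0 //.
  by rewrite subr_gt0 ltr_pdivrMr ?ltr0n // mul1r.
have Qge0 : forall yQ yS i, 0 <= Qi yQ yS i.
  move=> yQ yS i; have [h _] := @Qrow_bounds R n sigma c gam nu rho i (fun j => yQ i j - zQ0 i j)
      (yS i 0 - zS0 i 0) hn (hc i) (hg i) hP.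
  apply: le_trans h; apply: mulr_ge0; [exact: ltW | exact: sqr_ge0].
have Qle : forall yQ yS i, Qi yQ yS i <= \sum_(k < n) Qi yQ yS k.
  move=> yQ yS i; rewrite (bigD1 i) //= lerDl; apply: sumr_ge0 => k _; exact: Qge0.
have KQ : forall i j, exists K : R, 0 <= K /\ forall (yQ : 'M[R]_n) (yS : 'cV[R]_n),
    (yQ i j - zQ0 i j) ^+ 2 <= K * Qi yQ yS i.
  move=> i j.
  exists ((4 / gam i + 2 * (- (sigma / Num.sqrt (n%:R : R) * rho j)) ^+ 2 /
     (gam i * sigma ^+ 2 / 2 * (1 - (\sum_(j < n) rho j ^+ 2) / n%:R))) / nu j ^+ 2).
  split.
    apply: divr_ge0; last exact: sqr_ge0.
    apply: addr_ge0; first by rewrite divr_ge0 // ltW.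
    apply: divr_ge0; [apply: mulr_ge0 => //; exact: sqr_ge0 | exact: ltW].
  move=> yQ yS.
  have [h1 h2] := @Qrow_bounds R n sigma c gam nu rho i (fun j => yQ i j - zQ0 i j)
      (yS i 0 - zS0 i 0) hn (hc i) (hg i) hP.
  apply: (entry_bound (hg i) (hkap i) (hnu j) (h2 j) h1).
  ring.
have KS : forall i, exists K : R, 0 <= K /\ forall (yQ : 'M[R]_n) (yS : 'cV[R]_n),
    (yS i 0 - zS0 i 0) ^+ 2 <= K * Qi yQ yS i.
  move=> i; exists (gam i * sigma ^+ 2 / 2 * (1 - (\sum_(j < n) rho j ^+ 2) / n%:R))^-1.
  split; first by rewrite invr_ge0 ltW.
  move=> yQ yS.
  have [h1 _] := @Qrow_bounds R n sigma c gam nu rho i (fun j => yQ i j - zQ0 i j)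
      (yS i 0 - zS0 i 0) hn (hc i) (hg i) hP.
  rewrite -(ler_pM2l (hkap i)).
  set k := (gam i * sigma ^+ 2 / 2 * (1 - (\sum_(j < n) rho j ^+ 2) / n%:R)) in h1 *.
  have -> : k * (k^-1 * Qi yQ yS i) = Qi yQ yS i.
    by rewrite mulrA mulfV ?mul1r // gt_eqF // /k hkap.
  exact: h1.
have hn0 : (0 : R) < n%:R by rewrite ltr0n.
split.
- move=> yQ yS; rewrite Fdiff.
  have : 0 <= (n%:R)^-1 * \sum_(i < n) Qi yQ yS i.
    apply: mulr_ge0; first by rewrite invr_ge0 ltW.
    by apply: sumr_ge0 => i _; exact: Qge0.
  lra.
- move=> yQ yS hmax.
  have h := hmax zQ0 zS0; rewrite (Fdiff yQ yS) in h.
  have hS : \sum_(i < n) Qi yQ yS i <= 0.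
    have : (n%:R)^-1 * \sum_(i < n) Qi yQ yS i <= 0 by lra.
    by rewrite pmulr_rle0 // invr_gt0.
  have hQ0 : forall i, Qi yQ yS i <= 0 := fun i => le_trans (Qle yQ yS i) hS.
  split; apply/matrixP => i j.
  + have [K [hK hb]] := KQ i j.
    apply/eqP; rewrite -subr_eq0; apply/eqP; apply: sq_le0.
    apply: (le_trans (hb yQ yS)); exact: mulr_ge0_le0.
  + have [K [hK hb]] := KS i.
    rewrite (ord1 j).
    apply/eqP; rewrite -subr_eq0; apply/eqP; apply: sq_le0.
    apply: (le_trans (hb yQ yS)); exact: mulr_ge0_le0.
- move=> z hz.
  have hzb : forall gP, 0 < gP -> \sum_(i < n) Qi (z gP).1 (z gP).2 i <=
      n%:R * (Hf sigma nu rho zQ0 zS0) * gP.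
    move=> gP hgP; have := hz gP hgP zQ0 zS0.
    rewrite !(@fobjE R n sigma gP) (Fdiff (z gP).1 (z gP).2).
    have := @Hf_ge0 R n sigma nu rho (z gP).1 (z gP).2 hr.
    set S := \sum_(i < n) _.
    move=> hH hle.
    have h1 : (n%:R)^-1 * S <= gP * Hf sigma nu rho zQ0 zS0 by nra.
    have -> : S = n%:R * ((n%:R)^-1 * S) by rewrite mulrA mulfV ?mul1r // gt_eqF.
    rewrite -mulrA (mulrC (Hf sigma nu rho zQ0 zS0)); apply: ler_wpM2l => //; exact: ltW.
  have hH0 := @Hf_ge0 R n sigma nu rho zQ0 zS0 hr.
  have -> : z = (fun t => ((z t).1, (z t).2)) by apply/funext => t; case: (z t).
  have hQ : (fun t => (z t).1) @ 0^'+ --> zQ0.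
    apply: mx_cvg_entries => i j e he.
    have [K [hK hb]] := KQ i j.
    apply: (@sq_near R (fun t => (z t).1 i j) (zQ0 i j) (K * (n%:R * Hf sigma nu rho zQ0 zS0))) => //.
      by rewrite mulr_ge0 // mulr_ge0 // ltW.
    move=> t ht; apply: (le_trans (hb _ (z t).2)); rewrite -mulrA.
    apply: ler_wpM2l => //; exact: le_trans (Qle _ _ i) (hzb t ht).
  have hS : (fun t => (z t).2) @ 0^'+ --> zS0.
    apply: mx_cvg_entries => i j e he.
    have [K [hK hb]] := KS i.
    rewrite (ord1 j).
    apply: (@sq_near R (fun t => (z t).2 i 0) (zS0 i 0) (K * (n%:R * Hf sigma nu rho zQ0 zS0))) => //.
      by rewrite mulr_ge0 // mulr_ge0 // ltW.
    move=> t ht; apply: (le_trans (hb (z t).1 _)); rewrite -mulrA.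
    apply: ler_wpM2l => //; exact: le_trans (Qle _ _ i) (hzb t ht).
  exact: (cvg_pair hQ hS).
- cbv zeta => i; split.
  + move=> j hj; rewrite !mxE /q0 (negPf hj).
    by rewrite mulrC divfK // gt_eqF.
  + rewrite !mxE /q0 eqxx.
    by rewrite mulrC divfK // gt_eqF.
  + by rewrite mxE /s0 /pic /Ac.
  + exact: (pic_bounds hn hr (hc i) (hg i) (hnu i)).
- move=> i.
  have [h1 h2 h3] := signs0 hn hr hsig (hc i) (hg i) (hnu i).
  split.
  + by rewrite mxE.
  + by rewrite mxE.
  + by move=> j hj; rewrite mxE h3.
Qed.
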